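(* Let $G=(V,E)$ be a finite graph with $V=\{1,\dots,n\}$, special vertex $i\in V$, symmetric edge weights $w_E:V\times V\to[0,\infty)$ with $w_E(u,v)=0$ whenever $uv\notin E$, and vertex weights $w_V:V\to[0,\infty)$ not identically zero. Suppose $G$ is positively connected. Then a function $g:V\to\mathbb{R}$ with $g(i)=0$ and $\|g\|_w=1$ is a solution of $$\min_{\|g\|_w=1,\ g(i)=0}\ \sum_{jk\in E} w_E(j,k)\,(g(k)-g(j))^2$$ if and only if the vector $(g(j))_{j\in V\setminus\{i\}}$ is an eigenvector of $L_i^{-1}W_{V,i}$ associated with its largest eigenvalue.
   Context: $\|g\|_w=\sqrt{\sum_{u\in V}w_V(u)g(u)^2}$. Each edge is counted once in the sum. $L=D-W_E$ is the weighted Laplacian, where $W_E=(w_E(u,v))$ and $D$ is diagonal with $d(k)=\sum_j w_E(k,j)$; $L_i$ is $L$ with row and column $i$ deleted (it is invertible when $G$ is positively connected); $W_{V,i}$ is the diagonal matrix of $w_V$ with row and column $i$ deleted. $G$ is positively connected if any two vertices are joined by a path all of whose edges have positive weight. The eigenvalues of $L_i^{-1}W_{V,i}$ are real. *)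

(* Defs.v *)
From HB Require Import structures.
From mathcomp Require Import all_boot all_order all_algebra.
Set Implicit Arguments. Unset Strict Implicit. Unset Printing Implicit Defensive.
Import Order.TTheory GRing.Theory Num.Theory.
Local Open Scope ring_scope.

(* Vertices V = {1..n} are represented by 'I_n. *)
Section Defs.
Variables (R : rcfType) (n : nat).

Definition wnorm (wV : 'I_n -> R) (g : 'I_n -> R) : R :=
  Num.sqrt (\sum_(u < n) wV u * g u ^+ 2).

(* sum over edges jk in E, each (unordered) edge counted once *)
Definition energy (e : rel 'I_n) (wE : 'I_n -> 'I_n -> R) (g : 'I_n -> R) : R :=
  \sum_(j < n) \sum_(k < n | (j < k)%N && e j k) wE j k * (g k - g j) ^+ 2.

Definition laplacian (wE : 'I_n -> 'I_n -> R) : 'M[R]_n :=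
  \matrix_(k, j) ((if k == j then \sum_(l < n) wE k l else 0) - wE k j).

Definition Lred (wE : 'I_n -> 'I_n -> R) (i : 'I_n) : 'M[R]_n.-1 :=
  row' i (col' i (laplacian wE)).

Definition WVred (wV : 'I_n -> R) (i : 'I_n) : 'M[R]_n.-1 :=
  row' i (col' i (diag_mx (\row_u wV u))).

Definition pos_connected (wE : 'I_n -> 'I_n -> R) : Prop :=
  forall u v : 'I_n, connect (fun a b => 0 < wE a b) u v.

End Defs.

Section Eig.
Variables (R : rcfType) (m : nat).
Definition is_eigvec (M : 'M[R]_m) (x : 'cV[R]_m) (lam : R) : Prop :=
  x != 0 /\ M *m x = lam *: x.
Definition is_eigval (M : 'M[R]_m) (lam : R) : Prop :=
  exists x, is_eigvec M x lam.
Definition is_largest_eigval (M : 'M[R]_m) (lam : R) : Prop :=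
  is_eigval M lam /\ forall mu, is_eigval M mu -> mu <= lam.
End Eig.

(* Main.v *)
From HB Require Import structures.
Require Import Defs.
From mathcomp Require Import all_boot all_order all_algebra.
From mathcomp Require Import ring lra.
From mathcomp Require Import complex.
Set Implicit Arguments. Unset Strict Implicit. Unset Printing Implicit Defensive.
Import Order.TTheory GRing.Theory Num.Theory.
Local Open Scope ring_scope.

Section Abs.
Variable R : rcfType.

Definition bf m (B : 'M[R]_m) (x y : 'cV[R]_m) : R := (x^T *m B *m y) 0 0.
Definition qf m (B : 'M[R]_m) (x : 'cV[R]_m) : R := bf B x x.

Lemma bfDl m (B : 'M[R]_m) x y z : bf B (x + y) z = bf B x z + bf B y z.
Proof. by rewrite /bf linearD /= !mulmxDl mxE. Qed.
Lemma bfDr m (B : 'M[R]_m) x y z : bf B z (x + y) = bf B z x + bf B z y.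
Proof. by rewrite /bf !mulmxDr mxE. Qed.
Lemma bfZl m (B : 'M[R]_m) a x z : bf B (a *: x) z = a * bf B x z.
Proof. by rewrite /bf linearZ /= -!scalemxAl mxE. Qed.
Lemma bfZr m (B : 'M[R]_m) a x z : bf B z (a *: x) = a * bf B z x.
Proof. by rewrite /bf -!scalemxAr mxE. Qed.
Lemma bf_sym m (B : 'M[R]_m) x y : B^T = B -> bf B x y = bf B y x.
Proof.
move=> sB; rewrite /bf.
transitivity ((x^T *m B *m y)^T 0 0); first by rewrite [in RHS]mxE.
by rewrite !trmx_mul trmxK sB mulmxA.
Qed.
Lemma bfMr m (B : 'M[R]_m) x y : bf B x y = bf 1%:M x (B *m y).
Proof. by rewrite /bf mulmx1 mulmxA. Qed.
Lemma bf1 m (x y : 'cV[R]_m) : bf 1%:M x y = \sum_j x j 0 * y j 0.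
Proof. by rewrite /bf mulmx1 mxE; apply: eq_bigr => j _; rewrite mxE. Qed.

Lemma qfD m (B : 'M[R]_m) x w t : B^T = B ->
  qf B (x + t *: w) = qf B x + 2 * t * bf B w x + t ^+ 2 * qf B w.
Proof.
move=> sB; rewrite /qf !bfDl !bfDr !bfZl !bfZr (bf_sym x w sB).
rewrite /GRing.exp /=. ring.
Qed.

Lemma qf1_eq0 m (x : 'cV[R]_m) : qf 1%:M x = 0 -> x = 0.
Proof.
rewrite /qf bf1 => /eqP; rewrite psumr_eq0 => [/allP H|j _]; last by rewrite -expr2 sqr_ge0.
apply/matrixP => j k; rewrite (ord1 k) [RHS]mxE.
by have /implyP/(_ isT) := H j (mem_index_enum j); rewrite -expr2 sqrf_eq0 => /eqP.
Qed.

Lemma quad0 (b c : R) : (forall t, b * t + c * t ^+ 2 <= 0) -> b = 0.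
Proof.
move=> H; apply/eqP; apply: contraT => nb.
have hu : 0 < `|c| + 1 by rewrite ltr_wpDl.
set u := (`|c| + 1)^-1.
have e : b * (b * u) + c * (b * u) ^+ 2 = b ^+ 2 * u ^+ 2 * ((`|c| + 1) + c).
  rewrite /u; field; by rewrite gt_eqF.
have := H (b * u); rewrite e => H2.
have hb : 0 < b ^+ 2 by rewrite lt_def sqrf_eq0 nb sqr_ge0.
have hu2 : 0 < u ^+ 2 by rewrite exprn_gt0 // invr_gt0.
have hc : 0 < `|c| + 1 + c by have := ler_norm (- c); rewrite normrN; lra.
have h := mulr_gt0 (mulr_gt0 hb hu2) hc.
by have := lt_le_trans h H2; rewrite ltxx.
Qed.

Lemma lagrange m (A L : 'M[R]_m) x0 : A^T = A -> L^T = L ->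
  (forall x, qf A x * qf L x0 <= qf A x0 * qf L x) ->
  qf L x0 *: (A *m x0) = qf A x0 *: (L *m x0).
Proof.
move=> sA sL H.
set d := qf L x0 *: (A *m x0) - qf A x0 *: (L *m x0).
apply/eqP; rewrite -subr_eq0; apply/eqP; apply: qf1_eq0.
have hd : qf 1%:M d = qf L x0 * bf A d x0 - qf A x0 * bf L d x0.
  rewrite {1}/qf {2}/d bfDr bfZr -scaleN1r bfZr bfZr -!bfMr; ring.
have : 2 * qf 1%:M d = 0.
  apply: (@quad0 _ (qf L x0 * qf A d - qf A x0 * qf L d)) => t.
  have := H (x0 + t *: d); rewrite !qfD // hd => h; nra.
by move/eqP; rewrite mulf_eq0 pnatr_eq0 orFb => /eqP.
Qed.

Definition posdef m (L : 'M[R]_m) := forall x, x != 0 -> 0 < qf L x.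

Lemma posdef_unit m (L : 'M[R]_m) : L^T = L -> posdef L -> L \in unitmx.
Proof.
move=> sL pL; rewrite unitmxE unitfE; apply/negP => /det0P [v nv vL0].
have := pL v^T; rewrite trmx_eq0 => /(_ nv).
by rewrite /qf /bf trmxK vL0 mul0mx mxE ltxx.
Qed.

Lemma ReD (x y : R[i]) : complex.Re (x + y) = complex.Re x + complex.Re y.
Proof. by case: x => a b; case: y => c d; simpc. Qed.
Lemma ImD (x y : R[i]) : complex.Im (x + y) = complex.Im x + complex.Im y.
Proof. by case: x => a b; case: y => c d; simpc. Qed.
Lemma ReM (x y : R[i]) : complex.Re (x * y) = complex.Re x * complex.Re y - complex.Im x * complex.Im y.
Proof. by case: x => a b; case: y => c d; simpc. Qed.
Lemma ImM (x y : R[i]) : complex.Im (x * y) = complex.Re x * complex.Im y + complex.Im x * complex.Re y.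
Proof. by case: x => a b; case: y => c d; simpc. Qed.
Lemma ReMR (x : R[i]) r : complex.Re (x * (r%:C)%C) = complex.Re x * r.
Proof. by rewrite ReM /= mulr0 subr0. Qed.
Lemma ImMR (x : R[i]) r : complex.Im (x * (r%:C)%C) = complex.Im x * r.
Proof. by rewrite ImM /= mulr0 add0r. Qed.

Lemma Re_sum I (r : seq I) (F : I -> R[i]) : complex.Re (\sum_(i <- r) F i) = \sum_(i <- r) complex.Re (F i).
Proof. by apply: (big_morph _ ReD). Qed.
Lemma Im_sum I (r : seq I) (F : I -> R[i]) : complex.Im (\sum_(i <- r) F i) = \sum_(i <- r) complex.Im (F i).
Proof. by apply: (big_morph _ ImD). Qed.

Lemma real_eig k (A L : 'M[R]_k.+1) : A^T = A -> L^T = L -> posdef L ->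
  exists mu, exists2 v : 'cV[R]_k.+1, v != 0 & A *m v = mu *: (L *m v).
Proof.
move=> sA sL pL.
have Lu := posdef_unit sL pL.
set f := real_complex R.
have [c] : exists c, root (char_poly (map_mx f (A *m invmx L))) c.
  by apply/closed_rootP; rewrite size_char_poly.
rewrite -eigenvalue_root_char => /eigenvalueP [z zM nz].
have zA : z *m map_mx f A = c *: (z *m map_mx f L).
  have -> : map_mx f A = map_mx f (A *m invmx L *m L) by rewrite mulmxKV.
  by rewrite map_mxM mulmxA zM scalemxAl.
set a : 'cV[R]_k.+1 := \col_j complex.Re (z 0 j).
set b : 'cV[R]_k.+1 := \col_j complex.Im (z 0 j).
have eRe : forall B : 'M[R]_k.+1, B^T = B -> forall j,
    complex.Re ((z *m map_mx f B) 0 j) = (B *m a) j 0.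
  move=> B sB j; rewrite !mxE Re_sum; apply: eq_bigr => i _.
  rewrite !mxE ReMR mulrC; congr (_ * _); by rewrite -[in LHS]sB mxE.
have eIm : forall B : 'M[R]_k.+1, B^T = B -> forall j,
    complex.Im ((z *m map_mx f B) 0 j) = (B *m b) j 0.
  move=> B sB j; rewrite !mxE Im_sum; apply: eq_bigr => i _.
  rewrite !mxE ImMR mulrC; congr (_ * _); by rewrite -[in LHS]sB mxE.
have eA : A *m a = complex.Re c *: (L *m a) - complex.Im c *: (L *m b).
  apply/matrixP => j l; rewrite (ord1 l).
  have zj : (z *m map_mx f A) 0 j = (c *: (z *m map_mx f L)) 0 j by rewrite zA.
  have := congr1 (@complex.Re R) zj.
  by rewrite eRe // [in RHS]mxE ReM eRe // eIm // => ->; rewrite !mxE.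
have eB : A *m b = complex.Re c *: (L *m b) + complex.Im c *: (L *m a).
  apply/matrixP => j l; rewrite (ord1 l).
  have zj : (z *m map_mx f A) 0 j = (c *: (z *m map_mx f L)) 0 j by rewrite zA.
  have := congr1 (@complex.Im R) zj.
  by rewrite eIm // [in RHS]mxE ImM eRe // eIm // => ->; rewrite !mxE.
set r := complex.Re c in eA eB; set q := complex.Im c in eA eB.
have hq : q * (qf L a + qf L b) = 0.
  have h1 : bf 1%:M b (A *m a) = bf 1%:M a (A *m b) by rewrite -!bfMr bf_sym.
  move: h1; rewrite eA eB bfDr bfDr -scaleN1r !bfZr -!bfMr (bf_sym b a sL) /qf.
  move=> h1; nra.
have qL0 : forall x, 0 <= qf L x.
  move=> x; have [->|nx] := eqVneq x 0; last exact/ltW/pL.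
  by rewrite /qf /bf mulmx0 mxE.
have nab : (a != 0) || (b != 0).
  apply: contraT; rewrite negb_or !negbK => /andP [/eqP a0 /eqP b0].
  move: nz; apply: contraR => _; apply/eqP/matrixP => i j; rewrite (ord1 i) mxE.
  move/matrixP: a0 => /(_ j 0); move/matrixP: b0 => /(_ j 0).
  rewrite !mxE => e2 e1; by case: (z 0 j) e1 e2 => /= u v -> ->.
have q0 : q = 0.
  move: hq => /eqP; rewrite mulf_eq0 => /orP [/eqP //|].
  case/orP: nab => [/pL|/pL] h; have := qL0 a; have := qL0 b; move=> h2 h3 /eqP h4; lra.
exists r; case/orP: nab => [na|nb].
  by exists a => //; rewrite eA q0 scale0r subr0.
by exists b => //; rewrite eB q0 scale0r addr0.
Qed.

Lemma posdef_ge0 m (L : 'M[R]_m) x : posdef L -> 0 <= qf L x.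
Proof.
move=> pL; have [->|nx] := eqVneq x 0; last exact/ltW/pL.
by rewrite /qf /bf mulmx0 mxE.
Qed.

Lemma bf1E m (y c : 'cV[R]_m) : bf 1%:M y c = \sum_r y r 0 * c r 0.
Proof. exact: bf1. Qed.

Lemma sum_delta n (a : 'I_n) (F : 'I_n -> R) : \sum_r (r == a)%:R * F r = F a.
Proof.
rewrite (bigD1 a) //= eqxx mul1r big1 ?addr0 // => r /negbTE ->; by rewrite mul0r.
Qed.

Lemma qfT m p (B : 'M[R]_m) (P : 'M[R]_(m, p)) z :
  qf (P^T *m B *m P) z = qf B (P *m z).
Proof. by rewrite /qf /bf trmx_mul !mulmxA. Qed.

Lemma max_rayleigh k (A L : 'M[R]_k.+1) : A^T = A -> L^T = L -> posdef L ->
  exists2 x0 : 'cV[R]_k.+1, x0 != 0 &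
    forall x, qf A x * qf L x0 <= qf A x0 * qf L x.
Proof.
elim: k A L => [|k IH] A L sA sL pL.
  exists (const_mx 1).
    apply/eqP => /matrixP /(_ 0 0); rewrite !mxE => /eqP; by rewrite oner_eq0.
  move=> x; rewrite le_eqVlt; apply/orP; left; apply/eqP.
  rewrite /qf /bf !mxE !big_ord1 !mxE !big_ord1 !mxE.
  ring.
have [mu [v nv Av]] := real_eig sA sL pL.
set c := L *m v.
have cE : L *m v = c by [].
clearbody c.
have Qv : 0 < qf L v by exact: pL.
have Qvc : qf L v = bf 1%:M v c by rewrite /qf bfMr cE.
have [p cp] : exists p, c p 0 != 0.
  case: (pickP (fun p => c p 0 != 0)) => [p cp|h]; first by exists p.
  move: Qv; rewrite Qvc bf1E big1 ?ltxx // => r _.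
  by move: (h r) => /= /negbFE/eqP ->; rewrite mulr0.
set P : 'M[R]_(k.+2, k.+1) := \matrix_(r, j)
  ((r == lift p j)%:R - (r == p)%:R * (c (lift p j) 0 / c p 0)).
have F2 : forall (z : 'cV[R]_k.+1) j, (P *m z) (lift p j) 0 = z j 0.
  move=> z j; rewrite mxE -[RHS](sum_delta j (fun i => z i 0)).
  apply: eq_bigr => i _; rewrite /P mxE (inj_eq lift_inj) (eq_sym (lift p j)) (negbTE (neq_lift p j)).
  by rewrite mul0r subr0 eq_sym.
have F1 : forall z : 'cV[R]_k.+1, bf 1%:M (P *m z) c = 0.
  move=> z; rewrite bf1E.
  under eq_bigr => r _ do rewrite mxE big_distrl /=.
  rewrite exchange_big /= big1 // => j _.
  under eq_bigr => r _ do rewrite /P mxE mulrBl !mulrBl.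
  rewrite sumrB.
  under eq_bigr => r _ do rewrite -!mulrA.
  under [X in _ - X]eq_bigr => r _ do rewrite -!mulrA.
  rewrite !sum_delta; apply/eqP; rewrite subr_eq0; apply/eqP.
  by rewrite mulrC; field.
have F3 : forall y, bf 1%:M y c = 0 -> y = P *m (\col_j y (lift p j) 0).
  move=> y hy; apply/matrixP => r l; rewrite (ord1 l).
  case: (unliftP p r) => [j ->|->]; first by rewrite F2 mxE.
  move: hy; rewrite bf1E (bigD1_ord p) //= => /eqP; rewrite addr_eq0 => /eqP hy.
  rewrite mxE.
  under eq_bigr => j _ do rewrite /P !mxE eqxx (negbTE (neq_lift p _)) sub0r mul1r.
  apply: (mulIf cp); rewrite hy mulr_suml -sumrN; apply: eq_bigr => j _.
  by field.
have Pinj : forall z : 'cV[R]_k.+1, z != 0 -> P *m z != 0.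
  move=> z; apply: contraNN => /eqP Pz0; apply/eqP/matrixP => j l.
  by rewrite (ord1 l) -F2 Pz0 !mxE.
have sA' : (P^T *m A *m P)^T = P^T *m A *m P by rewrite !trmx_mul trmxK sA mulmxA.
have sL' : (P^T *m L *m P)^T = P^T *m L *m P by rewrite !trmx_mul trmxK sL mulmxA.
have pL' : posdef (P^T *m L *m P) by move=> z nz; rewrite qfT; apply/pL/Pinj.
have [z0 nz0 Hz0] := IH _ _ sA' sL' pL'.
set y0 := P *m z0.
have Q0 : 0 < qf L y0 by apply/pL/Pinj.
have qAv : qf A v = mu * qf L v by rewrite /qf bfMr Av bfZr -bfMr.
have key : forall x, exists y, [/\ qf A x = qf A y + (bf 1%:M x c / qf L v) ^+ 2 * (mu * qf L v),
   qf L x = qf L y + (bf 1%:M x c / qf L v) ^+ 2 * qf L v &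
   qf A y * qf L y0 <= qf A y0 * qf L y].
  move=> x; set al := bf 1%:M x c / qf L v.
  set y := x - al *: v.
  have hy : bf 1%:M y c = 0.
    rewrite /y bfDl -scaleN1r !bfZl -Qvc /al mulN1r divfK ?subrr //.
    by rewrite gt_eqF.
  have ex : x = y + al *: v by rewrite /y subrK.
  have hA : bf A v y = 0 by rewrite bf_sym // bfMr Av cE bfZr hy mulr0.
  have hL : bf L v y = 0 by rewrite bf_sym // bfMr cE hy.
  exists y; rewrite ex !qfD // hA hL qAv !mulr0 !addr0; split => //.
  by rewrite (F3 y hy) -!qfT; apply: Hz0.
have qLy0 := fun y => posdef_ge0 y pL.
have [le|lt] := lerP (qf A y0) (mu * qf L y0).
  exists v => // x; have [y [-> -> h]] := key x.
  set al := _ / _.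
  have t0 : 0 <= al ^+ 2 by rewrite sqr_ge0.
  have h1 : qf A y <= mu * qf L y.
    have : (qf A y - mu * qf L y) * qf L y0 <= 0.
      have := qLy0 y; nra.
    by rewrite pmulr_lle0 // subr_le0.
  rewrite qAv; nra.
exists y0; first by apply: Pinj.
move=> x; have [y [-> -> h]] := key x.
set al := _ / _.
have t0 : 0 <= al ^+ 2 * qf L v by rewrite mulr_ge0 // ?sqr_ge0 // ltW.
nra.
Qed.


Lemma qfZ m (B : 'M[R]_m) a x : qf B (a *: x) = a ^+ 2 * qf B x.
Proof. by rewrite /qf bfZl bfZr mulrA expr2. Qed.

Lemma qf_eig m (W L : 'M[R]_m) (x : 'cV[R]_m) mu : W *m x = mu *: (L *m x) -> qf W x = mu * qf L x.
Proof. by move=> e; rewrite /qf bfMr e bfZr -bfMr. Qed.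

Lemma eigE m (L : 'M[R]_m) (Lu : L \in unitmx) (W : 'M[R]_m) (x : 'cV[R]_m) lam :
  (invmx L *m W *m x = lam *: x) <-> (W *m x = lam *: (L *m x)).
Proof.
split => e.
  by rewrite -[W *m x](mulKVmx Lu) [invmx L *m (W *m x)]mulmxA e scalemxAr.
by rewrite -mulmxA e -scalemxAr mulKmx.
Qed.

Lemma abstract_main m (L W : 'M[R]_m) (g : 'cV[R]_m) : L^T = L -> W^T = W ->
  posdef L -> qf W g = 1 ->
  ((forall h, qf W h = 1 -> qf L g <= qf L h) <->
   exists lam, is_largest_eigval (invmx L *m W) lam /\
               is_eigvec (invmx L *m W) g lam).
Proof.
move=> sL sW pL qg.
have Lu := posdef_unit sL pL.
have ng : g != 0 by apply: contra_eqN qg => /eqP ->; rewrite /qf /bf mulmx0 mxE eq_sym oner_eq0.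
have s0 : 0 < qf L g by apply: pL.
have qge := fun y => posdef_ge0 y pL.
split.
  move=> H.
  have cl : forall x, qf W x * qf L g <= qf W g * qf L x.
    move=> x; rewrite qg mul1r.
    have [wx|wx] := lerP (qf W x) 0.
      by apply: le_trans (qge x); rewrite pmulr_lle0.
    set sq := Num.sqrt (qf W x).
    have sq0 : 0 < sq by rewrite sqrtr_gt0.
    have e1 : qf W (sq^-1 *: x) = 1.
      by rewrite qfZ exprVn sqr_sqrtr ?(ltW wx) // mulVf // gt_eqF.
    have h := H _ e1; rewrite qfZ exprVn sqr_sqrtr ?(ltW wx) // in h.
    apply: (le_trans (ler_wpM2l (ltW wx) h)).
    by rewrite mulrA mulfV ?gt_eqF // mul1r.
  have lg := lagrange sW sL cl; rewrite qg scale1r in lg.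
  have eg : W *m g = (qf L g)^-1 *: (L *m g).
    by rewrite -lg scalerA mulVf ?gt_eqF // scale1r.
  exists (qf L g)^-1; split; last by split => //; apply/(eigE Lu).
  split; first by exists g; split => //; apply/(eigE Lu).
  move=> mu [x [nx /(eigE Lu) ex]].
  have := cl x; rewrite (qf_eig ex) qg mul1r => h.
  have qx : 0 < qf L x by apply: pL.
  rewrite -(ler_pM2r s0) mulVf ?gt_eqF //.
  by rewrite -(ler_pM2r qx) mul1r mulrAC.
move=> [lam [[_ lmax] [_ /(eigE Lu) eg]]].
have qlg : lam * qf L g = 1 by rewrite -(qf_eig eg).
have lam0 : 0 < lam by nra.
move=> h qh.
case: m L W g sL sW pL qg Lu ng s0 qge lmax eg qlg h qh => [|k] L W g sL sW pL qg Lu ng s0 qge lmax eg qlg h qh.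
  by move: ng; rewrite flatmx0 eqxx.
have [x0 nx0 Hx0] := max_rayleigh sW sL pL.
have lx := lagrange sW sL Hx0.
have q0 : 0 < qf L x0 by apply: pL.
have ex0 : W *m x0 = (qf W x0 / qf L x0) *: (L *m x0).
  by rewrite mulrC -scalerA -lx scalerA mulVf ?gt_eqF // scale1r.
have rl : qf W x0 / qf L x0 <= lam by apply: lmax; exists x0; split => //; apply/(eigE Lu).
have := Hx0 h; rewrite qh mul1r => h1.
have h2 : 1 <= qf W x0 / qf L x0 * qf L h.
  by rewrite mulrAC ler_pdivlMr // mul1r.
have h3 : 1 <= lam * qf L h.
  by apply: le_trans h2 _; rewrite ler_wpM2r.
by rewrite -(ler_pM2l lam0) qlg.
Qed.

End Abs.

Section Glue.
Variable R : rcfType.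

Lemma qf_sum m (B : 'M[R]_m) x : qf B x = \sum_a \sum_b x a 0 * B a b * x b 0.
Proof.
rewrite /qf /bf mxE exchange_big /=; apply: eq_bigr => b _; rewrite mxE big_distrl /=.
by apply: eq_bigr => a _; rewrite mxE.
Qed.

Variables (n : nat) (i : 'I_n) (wE : 'I_n -> 'I_n -> R).
Hypothesis sE : forall u v, wE u v = wE v u.

Definition F (g : 'I_n -> R) j k := wE j k * (g k - g j) ^+ 2.

Lemma full_sum (g : 'I_n -> R) :
  \sum_j \sum_k F g j k = 2 * \sum_j \sum_k g j * laplacian wE j k * g k.
Proof.
have h1 : \sum_j \sum_k wE j k * g k ^+ 2 = \sum_j \sum_k wE j k * g j ^+ 2.
  by rewrite exchange_big /=; apply: eq_bigr => j _; apply: eq_bigr => k _; rewrite sE.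
have h2 : \sum_j \sum_k F g j k = \sum_j \sum_k wE j k * g k ^+ 2 +
   \sum_j \sum_k wE j k * g j ^+ 2 - 2 * \sum_j \sum_k g j * wE j k * g k.
  rewrite mulr_sumr -!big_split -sumrN -big_split /=; apply: eq_bigr => j _.
  rewrite mulr_sumr -!big_split -sumrN -big_split /=; apply: eq_bigr => k _.
  rewrite /F; ring.
rewrite h2 h1; have -> : forall a b : R, a + a - 2 * b = 2 * (a - b) by move=> a b; ring.
congr (_ * _); rewrite -sumrB; apply: eq_bigr => j _.
symmetry; under eq_bigr => k _ do rewrite /laplacian mxE mulrBr mulrBl.
rewrite sumrB; congr (_ - _).
rewrite (bigD1 j) //= eqxx [X in _ + X]big1 ?addr0; last first.
  by move=> k; rewrite eq_sym => /negbTE ->; rewrite mulr0 mul0r.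
by rewrite mulr_sumr mulr_suml; apply: eq_bigr => k _; ring.
Qed.

Lemma F_sym g j k : F g j k = F g k j.
Proof. rewrite /F sE; ring. Qed.

Lemma F_diag g j : F g j j = 0.
Proof. by rewrite /F subrr expr0n /= mulr0. Qed.

Lemma energyE (e : rel 'I_n) g : (forall u v, ~~ e u v -> wE u v = 0) ->
  2 * energy e wE g = \sum_j \sum_k F g j k.
Proof.
move=> hE.
have e1 : energy e wE g = \sum_(j < n) \sum_(k < n) (if (j < k)%N then F g j k else 0).
  apply: eq_bigr => j _; rewrite -big_mkcond /= [RHS](bigID (e j)) /=.
  rewrite [X in _ = _ + X]big1 ?addr0; last first.
    by move=> k /andP [_ /hE]; rewrite /F => ->; rewrite mul0r.
  by apply: eq_bigr => k _.
have e2 : \sum_j \sum_k F g j k = \sum_(j < n) \sum_(k < n) (if (j < k)%N then F g j k else 0)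
   + \sum_(j < n) \sum_(k < n) (if (k < j)%N then F g j k else 0).
  rewrite -big_split; apply: eq_bigr => j _; rewrite -big_split; apply: eq_bigr => k _ /=.
  case: ltngtP => [h|h|h]; rewrite ?addr0 ?add0r //.
  by rewrite (val_inj h) F_diag.
rewrite e2 e1 [X in _ = _ + X]exchange_big /= mulr2n mulrDl mul1r; congr (_ + _).
by apply: eq_bigr => j _; apply: eq_bigr => k _; rewrite F_sym.
Qed.

Lemma redE g : g i = 0 ->
  qf (Lred wE i) (\col_j g (lift i j)) = \sum_j \sum_k g j * laplacian wE j k * g k.
Proof.
move=> gi; rewrite qf_sum [RHS](bigD1_ord i) //= [X in _ = X + _]big1 ?add0r; last first.
  by move=> k _; rewrite gi !mul0r.
apply: eq_bigr => a _; rewrite [RHS](bigD1_ord i) //= gi mulr0 add0r.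
by apply: eq_bigr => b _; rewrite /Lred !mxE.
Qed.

Lemma lap_sym : (Lred wE i)^T = Lred wE i.
Proof.
apply/matrixP => a b; rewrite /Lred !mxE (eq_sym (lift i b)) sE.
by case: eqP => // /lift_inj ->.
Qed.

End Glue.

Section Glue2.
Variable R : rcfType.
Variables (n : nat) (i : 'I_n) (wV : 'I_n -> R).

Lemma WV_sym : (WVred wV i)^T = WVred wV i.
Proof.
apply/matrixP => a b; rewrite /WVred !mxE (eq_sym (lift i b)).
by case: eqP => // /lift_inj ->.
Qed.

Lemma wnormE g : g i = 0 -> (forall u, 0 <= wV u) ->
  (wnorm wV g = 1 <-> qf (WVred wV i) (\col_j g (lift i j)) = 1).
Proof.
move=> gi pV.
have -> : qf (WVred wV i) (\col_j g (lift i j)) = \sum_u wV u * g u ^+ 2.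
  rewrite qf_sum [RHS](bigD1_ord i) //= gi expr0n /= mulr0 add0r.
  apply: eq_bigr => a _; rewrite (bigD1_ord a) //= big1 ?addr0.
    by rewrite /WVred !mxE eqxx mulr1n; ring.
  by move=> b _; rewrite /WVred !mxE (inj_eq lift_inj) (negbTE (neq_lift a b)) mulr0n mulr0 mul0r.
have s0 : 0 <= \sum_u wV u * g u ^+ 2 by apply: sumr_ge0 => u _; rewrite mulr_ge0 // sqr_ge0.
rewrite /wnorm; split => [h|->]; last exact: sqrtr1.
by rewrite -(sqr_sqrtr s0) h expr1n.
Qed.

End Glue2.

Section Glue3.
Variable R : rcfType.
Variables (n : nat) (i : 'I_n) (wE : 'I_n -> 'I_n -> R).
Hypothesis sE : forall u v, wE u v = wE v u.
Hypothesis pE : forall u v, 0 <= wE u v.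
Hypothesis cE : pos_connected wE.

Definition ext (x : 'cV[R]_n.-1) (u : 'I_n) : R :=
  if unlift i u is Some j then x j 0 else 0.

Lemma ext_i x : ext x i = 0.
Proof. by rewrite /ext unlift_none. Qed.

Lemma ext_col x : \col_j ext x (lift i j) = x.
Proof. by apply/matrixP => j l; rewrite (ord1 l) mxE /ext liftK. Qed.

Lemma qfL_F g : g i = 0 ->
  2 * qf (Lred wE i) (\col_j g (lift i j)) = \sum_j \sum_k F wE g j k.
Proof. by move=> gi; rewrite redE // full_sum. Qed.

Lemma Lred_posdef : posdef (Lred wE i).
Proof.
move=> x nx.
have hF := qfL_F (ext_i x); rewrite ext_col in hF.
have Fge : forall j k, 0 <= F wE (ext x) j k.
  by move=> j k; rewrite /F mulr_ge0 // sqr_ge0.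
have s0 : 0 <= \sum_j \sum_k F wE (ext x) j k.
  by apply: sumr_ge0 => j _; apply: sumr_ge0.
rewrite lt_def; apply/andP; split; last by move: s0; rewrite -hF pmulr_rge0.
apply: contraNneq nx => q0.
have sum0 : \sum_j \sum_k F wE (ext x) j k = 0 by rewrite -hF q0 mulr0.
have F0 : forall j k, F wE (ext x) j k = 0.
  move=> j k.
  have h1 : \sum_k F wE (ext x) j k = 0.
    by apply: (psumr_eq0P _ sum0) => // j' _; apply: sumr_ge0 => k' _.
  by apply: (psumr_eq0P _ h1).
have edge : forall a b, 0 < wE a b -> ext x a = ext x b.
  move=> a b wab; have := F0 a b; rewrite /F => /eqP.
  rewrite mulf_eq0 gt_eqF //= sqrf_eq0 subr_eq0 => /eqP //.
have all0 : forall v, ext x v = 0.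
  move=> v; have /connectP [p pth ->] := cE i v.
  rewrite -(ext_i x); elim: p (i) pth => [//|a p IHp] u /= /andP [uab pth].
  by rewrite IHp // -(edge _ _ uab).
apply/eqP/matrixP => j l; rewrite (ord1 l) -(ext_col x) !mxE; exact: all0.
Qed.

End Glue3.

Theorem lemma6 (R : rcfType) (n : nat) (e : rel 'I_n) (i : 'I_n)
  (wE : 'I_n -> 'I_n -> R) (wV : 'I_n -> R) :
  (forall u v, e u v = e v u) ->
  (forall u v, wE u v = wE v u) ->
  (forall u v, 0 <= wE u v) ->
  (forall u v, ~~ e u v -> wE u v = 0) ->
  (forall u, 0 <= wV u) ->
  (exists u, wV u != 0) ->
  pos_connected wE ->
  forall g : 'I_n -> R, g i = 0 -> wnorm wV g = 1 ->
  ((forall h : 'I_n -> R, h i = 0 -> wnorm wV h = 1 ->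
      energy e wE g <= energy e wE h)
   <->
   exists lam : R,
     is_largest_eigval (invmx (Lred wE i) *m WVred wV i) lam /\
     is_eigvec (invmx (Lred wE i) *m WVred wV i) (\col_j g (lift i j)) lam).
Proof.
move=> _ sE pE hE pV _ cE g gi ng.
have enE : forall h, h i = 0 -> energy e wE h = qf (Lred wE i) (\col_j h (lift i j)).
  move=> h hi; apply: (@mulfI _ 2); first by rewrite pnatr_eq0.
  by rewrite energyE // qfL_F.
have qg := (wnormE gi pV).1 ng.
rewrite -(abstract_main (lap_sym i sE) (WV_sym i wV) (Lred_posdef i sE pE cE) qg).
split => H.
  move=> x qx; have := H (ext i x) (ext_i i x).
  rewrite (wnormE (ext_i i x) pV) ext_col => /(_ qx).
  by rewrite !enE ?ext_i // ext_col.
move=> h hi /(wnormE hi pV) qh; rewrite !enE //; exact: H.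
Qed.
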